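(* Let $k>0$, $N\in\mathbb{N}^+$, $h=\frac1{N+1}$, and let $\mathcal{A}_h$ be the matrix defined below. Then for every such $h\in(0,1)$, $i\mathbb{R}\subset\rho(\mathcal{A}_h)$, i.e. $\mathcal{A}_h$ has no purely imaginary eigenvalues.
   Context: Let $D_h$ be the $(N+1)\times(N+1)$ lower bidiagonal matrix with $\frac12$ on the diagonal and first subdiagonal, and $M_h$ the $(N+1)\times(N+1)$ upper bidiagonal matrix with $-\frac1h$ on the diagonal and $\frac1h$ on the first superdiagonal; $e_{N+1}=(0,\dots,0,1)^\top$. For $Y_h=(y_1,\dots,y_{N+1})^\top\in\mathbb{C}^{N+1}$ let $Z_h$ solve $D_h^\top Z_h=-M_h^\top Y_h+\tfrac{ik}2y_{N+1}e_{N+1}$ and set $\mathcal{A}_hY_h=D_h^{-1}[-iM_hZ_h-\tfrac kh y_{N+1}e_{N+1}]$. This is the order-reduction semi-discretization of $w_t=-iw_{xx}$, $w(0,t)=0$, $w_x(1,t)=-ikw(1,t)$. $\rho(\cdot)$ denotes the resolvent set. *)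

(* Defs.v *)
(* complex matrices over R[i], R an arbitrary real closed field
   (e.g. the real numbers). *)
From HB Require Import structures.
From mathcomp Require Import all_boot all_order all_algebra.
From mathcomp Require Import complex.

Import Order.TTheory GRing.Theory Num.Theory.
Local Open Scope ring_scope.
Local Open Scope complex_scope.

Section OrderReduction.
Context {R : rcfType}.
Local Notation C := R[i].

Definition meshh (N : nat) : R := (N.+1%:R)^-1.

Definition Dh (N : nat) : 'M[C]_(N.+1) :=
  \matrix_(i, j) (if (i == j) || (val i == (val j).+1) then (2^-1 : R)%:C else 0).

Definition Mh (N : nat) : 'M[C]_(N.+1) :=
  \matrix_(i, j) (if i == j then (- (meshh N)^-1)%:C
                  else if val j == (val i).+1 then ((meshh N)^-1)%:C else 0).

(* E Y = y_{N+1} e_{N+1} *)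
Definition Elast (N : nat) : 'M[C]_(N.+1) := delta_mx ord_max ord_max.

Definition Zh (k : R) (N : nat) (Y : 'cV[C]_(N.+1)) : 'cV[C]_(N.+1) :=
  invmx (Dh N)^T *m (- ((Mh N)^T *m Y) + ('i * (k / 2)%:C) *: (Elast N *m Y)).

Definition Ah_apply (k : R) (N : nat) (Y : 'cV[C]_(N.+1)) : 'cV[C]_(N.+1) :=
  invmx (Dh N) *m (- ('i *: (Mh N *m Zh k N Y)) - (k / meshh N)%:C *: (Elast N *m Y)).

Definition Ah (k : R) (N : nat) : 'M[C]_(N.+1) :=
  \matrix_(i, j) Ah_apply k N (delta_mx j 0) i 0.

Definition resolvent_set {n : nat} (A : 'M[C]_n) : pred C :=
  fun lam => (lam%:M - A) \in unitmx.

End OrderReduction.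

(* Main.v *)
Require Import Defs.
From HB Require Import structures.
From mathcomp Require Import all_boot all_order all_algebra.
From mathcomp Require Import complex.
From mathcomp Require Import ring lra zify.
Import Order.TTheory GRing.Theory Num.Theory.
Local Open Scope ring_scope.
Local Open Scope complex_scope.

Section S.
Variable R : rcfType.
Local Notation C := R[i].

Lemma sum_ind n m (g : 'I_n.+1 -> C) :
  \sum_(j < n.+1) (if val j == m then g j else 0) = if (m < n.+1)%N then g (inord m) else 0.
Proof.
case: ltnP => hm.
  rewrite (bigD1 (Ordinal hm)) //= eqxx big1 ?addr0.
    by congr g; apply: val_inj; rewrite /= inordK.
  by move=> j hj; case: eqP => // hj2; case/eqP: hj; apply: val_inj.
by apply: big1 => j _; case: eqP => // hj; move: (ltn_ord j); rewrite hj ltnNge hm.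
Qed.

Lemma Dh_unit N : Dh (R:=R) N \in unitmx.
Proof.
rewrite unitmxE unitfE det_trig; last first.
  apply/is_trig_mxP => i j hij; rewrite mxE.
  case: eqP => [e|_]; first by rewrite e ltnn in hij.
  by case: eqP => // e; rewrite e in hij; move: hij; rewrite ltnNge leqnSn.
rewrite prodf_seq_neq0; apply/allP => i _ /=; rewrite mxE eqxx /=.
by rewrite eq_complex /= eqxx andbT invr_eq0 pnatr_eq0.
Qed.

Definition yv n (Y : 'cV[C]_n.+1) (m : nat) : C := if (m < n.+1)%N then Y (inord m) 0 else 0.
Arguments yv {n}.
Definition yl n (Y : 'cV[C]_n.+1) (m : nat) : C := if m is m'.+1 then yv Y m' else 0.
Arguments yl {n}.

Lemma split_if (a b : bool) (c z : C) : ~~ (a && b) ->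
  (if a || b then c else 0) * z = (if a then c * z else 0) + (if b then c * z else 0).
Proof. by case: a; case: b => //= _; rewrite ?mul0r ?addr0 ?add0r. Qed.

Lemma yv_ord n (Y : 'cV[C]_n.+1) (i : 'I_n.+1) : yv Y i = Y i 0.
Proof. by rewrite /yv ltn_ord inord_val. Qed.

Lemma sum_indS n (i : nat) (g : 'I_n.+1 -> C) :
  \sum_(j < n.+1) (if i == (val j).+1 then g j else 0) =
  if i is i'.+1 then (if (i' < n.+1)%N then g (inord i') else 0) else 0.
Proof.
case: i => [|i]; first by rewrite big1.
rewrite -sum_ind; apply: eq_bigr => j _; by rewrite eqSS eq_sym.
Qed.

Lemma rowDT N (Z : 'cV[C]_N.+1) (i : 'I_N.+1) :
  ((Dh N)^T *m Z) i 0 = (2^-1 : R)%:C * (Z i 0 + yv Z i.+1).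
Proof.
rewrite mxE.
rewrite (eq_bigr (fun j : 'I_N.+1 => (if val j == val i then (2^-1 : R)%:C * Z j 0 else 0)
   + (if val j == (val i).+1 then (2^-1 : R)%:C * Z j 0 else 0))); last first.
  move=> j _; rewrite !mxE -split_if //.
  by apply/negP => /andP [/eqP h1 /eqP h2]; lia.
rewrite big_split /= !sum_ind ltn_ord inord_val /yv; case: ifP => _; ring.
Qed.

Lemma rowD N (Y : 'cV[C]_N.+1) (i : 'I_N.+1) :
  ((Dh N) *m Y) i 0 = (2^-1 : R)%:C * (Y i 0 + yl Y i).
Proof.
rewrite mxE.
rewrite (eq_bigr (fun j : 'I_N.+1 => (if val j == val i then (2^-1 : R)%:C * Y j 0 else 0)
   + (if val i == (val j).+1 then (2^-1 : R)%:C * Y j 0 else 0))); last first.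
  move=> j _; rewrite !mxE eq_sym -split_if //.
  by apply/negP => /andP [/eqP h1 /eqP h2]; lia.
rewrite big_split /= sum_ind sum_indS ltn_ord inord_val /yl /yv.
by case: (val i) => [|m] /=; rewrite ?addr0 //; case: ifP => _; ring.
Qed.

Lemma rowMT N (Y : 'cV[C]_N.+1) (i : 'I_N.+1) :
  ((Mh N)^T *m Y) i 0 = (- (meshh N)^-1)%:C * Y i 0 + ((meshh N)^-1)%:C * yl Y i.
Proof.
rewrite mxE.
rewrite (eq_bigr (fun j : 'I_N.+1 => (if val j == val i then (- (meshh N)^-1)%:C * Y j 0 else 0)
   + (if val i == (val j).+1 then ((meshh N)^-1)%:C * Y j 0 else 0))); last first.
  move=> j _; rewrite !mxE; have -> : (val j == val i) = (j == i) by [].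
  case: (j =P i) => [->|_].
    by rewrite (_ : (val i == (val i).+1) = false) ?addr0 //; apply/eqP; lia.
  by rewrite add0r; case: ifP => _; rewrite ?mul0r.
rewrite big_split /= sum_ind sum_indS ltn_ord inord_val /yl /yv.
by case E: (nat_of_ord i) => [|m] /=; [rewrite ?mulr0 ?addr0 | case: ifP => _; ring].
Qed.

Lemma rowM N (Z : 'cV[C]_N.+1) (i : 'I_N.+1) :
  ((Mh N) *m Z) i 0 = (- (meshh N)^-1)%:C * Z i 0 + ((meshh N)^-1)%:C * yv Z i.+1.
Proof.
rewrite mxE.
rewrite (eq_bigr (fun j : 'I_N.+1 => (if val j == val i then (- (meshh N)^-1)%:C * Z j 0 else 0)
   + (if val j == (val i).+1 then ((meshh N)^-1)%:C * Z j 0 else 0))); last first.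
  move=> j _; rewrite !mxE; have -> : (val j == val i) = (i == j) by rewrite eq_sym.
  case: (i =P j) => [->|_].
    by rewrite (_ : (val j == (val j).+1) = false) ?addr0 //; apply/eqP; lia.
  by rewrite add0r; case: ifP => _; rewrite ?mul0r.
rewrite big_split /= !sum_ind ltn_ord inord_val /yv.
by case: ifP => _; ring.
Qed.

Lemma rowE N (Y : 'cV[C]_N.+1) (i : 'I_N.+1) :
  ((Elast N) *m Y) i 0 = if val i == N then yv Y N else 0.
Proof.
rewrite mxE.
rewrite (eq_bigr (fun j : 'I_N.+1 => if val j == N then (if val i == N then Y j 0 else 0) else 0)); last first.
  move=> j _; rewrite !mxE.
  by case: (i =P ord_max) => [->|hi]; case: (j =P ord_max) => [->|hj]; rewrite /= ?eqxx ?mul1r ?mul0r //;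
   try (case: eqP => // h; [ exfalso; apply: hj; apply: val_inj; done ]);
   try (case: eqP => // h; exfalso; apply: hi; apply: val_inj; done).
rewrite sum_ind /yv ltnSn; by case: eqP.
Qed.
Section Core.

Definition lft (f : nat -> C) (m : nat) : C := if m is m'.+1 then f m' else 0.

Lemma h2E : (2^-1 : R)%:C = (2%:R)^-1 :> C.
Proof. by rewrite fmorphV rmorph_nat. Qed.

Lemma two_neq0 : (2%:R : C) != 0.
Proof. by rewrite pnatr_eq0. Qed.

Lemma ii : ('i : C) * 'i = -1.
Proof. by rewrite -expr2 sqr_i. Qed.

Variables (N : nat) (H k om : R) (y z : nat -> C).
Hypothesis hA : forall m, (m <= N)%N ->
  (2^-1 : R)%:C * (z m + z m.+1) = - ((- H)%:C * y m + H%:C * lft y m)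
     + ('i * (k / 2)%:C) * (if m == N then y N else 0).
Hypothesis hB : forall m, (m <= N)%N ->
  (om *i) * ((2^-1 : R)%:C * (y m + lft y m)) =
   - ('i * ((- H)%:C * z m + H%:C * z m.+1)) - (k * H)%:C * (if m == N then y N else 0).

Definition G m := (lft y m)^*%C * z m.

Lemma cell m : (m <= N)%N ->
  'i * om%:C * (((2^-1 : R)%:C * (y m + lft y m)) * ((2^-1 : R)%:C * (y m + lft y m))^*%C)
  = - ('i * H%:C * (G m.+1 - G m)) + 'i * H%:C * H%:C * ((y m - lft y m) * (y m - lft y m)^*%C)
    - (if m == N then k%:C * H%:C * (y N * (y N)^*%C) else 0).
Proof.
move=> hm.
have hl : 'i * om%:C = om *i by simpc.
have ha := hA m hm; have hb := hB m hm.
rewrite [LHS]mulrA hl hb /G /=.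
have hd : z m.+1 = 2%:R * (- ((- H)%:C * y m + H%:C * lft y m)
     + ('i * (k / 2)%:C) * (if m == N then y N else 0)) - z m.
  by rewrite -ha h2E; field.
rewrite hd.
rewrite !(rmorphM, rmorphD, rmorphB, rmorphN, conjc_real) !h2E.
case: eqP => [e|_].
  subst m; move: (lft y N) (y N) (z N) => a b c.
  by field: ii.
move: (lft y m) (y m) (z m) => a b c.
by field: ii.
Qed.

Lemma sum_last (W : C) : \sum_(0 <= m < N.+1) (if m == N then W else 0) = W.
Proof.
rewrite big_nat_recr //= eqxx big_nat big1 ?add0r // => i /andP [_ hi].
by rewrite (ltn_eqF hi).
Qed.

Hypothesis hz : z N.+1 = 0.

Definition ybar m := (2^-1 : R)%:C * (y m + lft y m).
Definition dy m := y m - lft y m.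

Lemma energy :
  'i * om%:C * (\sum_(0 <= m < N.+1) (ybar m * (ybar m)^*%C))
  = 'i * H%:C * H%:C * (\sum_(0 <= m < N.+1) (dy m * (dy m)^*%C))
    - k%:C * H%:C * (y N * (y N)^*%C).
Proof.
have hc : forall m, (0 <= m < N.+1)%N -> 'i * om%:C * (ybar m * (ybar m)^*%C) =
  - ('i * H%:C * (G m.+1 - G m)) + 'i * H%:C * H%:C * (dy m * (dy m)^*%C)
    - (if m == N then k%:C * H%:C * (y N * (y N)^*%C) else 0).
  by move=> m /andP [_ hm]; apply: cell.
rewrite mulr_sumr (eq_big_nat _ _ hc).
rewrite !big_split /= !sumrN sum_last -!mulr_sumr telescope_sumr //.
rewrite /G [lft y 0]/= rmorph0 mul0r hz mulr0 subr0 mulr0 oppr0 add0r.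
by rewrite /dy.
Qed.
Lemma i_real_eq (a b : R) : 'i * a%:C = b%:C :> C -> a = 0 /\ b = 0.
Proof.
move=> h; case: h => h1 h2.
move: h1 h2 => h1 h2; split; lra.
Qed.
Lemma ge0_realC (x : C) : 0 <= x -> exists r : R, 0 <= r /\ x = r%:C.
Proof.
move=> hx; exists (complex.Re x); have hr : x \is Num.real by apply: ger0_real.
by rewrite -ler0c RRe_real.
Qed.

Hypothesis hH : 0 < H.
Hypothesis hk : 0 < k.

Lemma yN0 : y N = 0 /\ (om < 0 -> \sum_(0 <= m < N.+1) (dy m * (dy m)^*%C) = 0).
Proof.
have e := energy.
have [p [hp hP]] : exists p : R, 0 <= p /\ \sum_(0 <= m < N.+1) (ybar m * (ybar m)^*%C) = p%:C.
  by apply: ge0_realC; apply: sumr_ge0 => m _; apply: mulcJ_ge0.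
have [q [hq hQ]] : exists q : R, 0 <= q /\ \sum_(0 <= m < N.+1) (dy m * (dy m)^*%C) = q%:C.
  by apply: ge0_realC; apply: sumr_ge0 => m _; apply: mulcJ_ge0.
have [s [hs hS]] : exists s : R, 0 <= s /\ y N * (y N)^*%C = s%:C.
  by apply: ge0_realC; apply: mulcJ_ge0.
rewrite hP hQ hS in e.
have e2 : 'i * (om * p - H * H * q)%:C = (- (k * H * s))%:C.
  by rewrite !(rmorphB, rmorphM, rmorphN); ring: e.
have [e3 e4] := i_real_eq _ _ e2.
have hs0 : s = 0.
  by apply/eqP; move/eqP: e4; rewrite oppr_eq0 !mulf_eq0 (gt_eqF hk) (gt_eqF hH).
split.
  by apply/eqP; move/eqP: hS; rewrite hs0 mulf_eq0 conjc_eq0 orbb.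
move=> hom; rewrite hQ; congr (_%:C).
have h1 : om * p <= 0 by apply: mulr_le0_ge0 => //; apply: ltW.
have h2 : 0 <= H * H * q by apply: mulr_ge0 => //; apply: mulr_ge0; apply: ltW.
have h3 : H * H * q = 0 by lra.
by move/eqP: h3; rewrite !mulf_eq0 (gt_eqF hH) /= => /eqP.
Qed.

Lemma all_zero : forall m, (m <= N)%N -> y m = 0.
Proof.
have [hyN hneg] := yN0.
have [hom|hom] := ltP om 0.
  have hQ0 := hneg hom; rewrite big_mkord in hQ0.
  have hdy := psumr_eq0P (fun i _ => mulcJ_ge0 _) hQ0.
  have hyl : forall m, (m <= N)%N -> y m = lft y m.
    move=> m hm; have := hdy (inord m) isT; rewrite inordK // => /eqP.
    by rewrite mulf_eq0 conjc_eq0 orbb subr_eq0 => /eqP.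
  elim=> [|m IH] hm; first by rewrite hyl.
  by rewrite hyl //= IH // ltnW.
have claim : forall j, (j <= N)%N -> y (N - j)%N = 0 /\ z (N - j)%N.+1 = 0.
  elim=> [|j IH] hj; first by rewrite subn0.
  have hm : (N - j = (N - j.+1).+1)%N by lia.
  have hmN : ((N - j.+1).+1 <= N)%N by lia.
  have := IH (ltnW hj); rewrite hm; move: (N - j.+1)%N hmN => m hmN [hy1 hz2] {hm}.
  have ha := hA (m.+1) hmN; have hb := hB (m.+1) hmN.
  rewrite hyN if_same /= hy1 hz2 in ha hb.
  have hzm : z m.+1 = - (2%:R * H%:C * y m).
    rewrite (_ : z m.+1 = 2%:R * ((2^-1:R)%:C * (z m.+1 + 0))); last by rewrite h2E; field.
    by rewrite ha rmorphN; ring.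
  have hl : 'i * om%:C = om *i by simpc.
  have key : 'i * ((om * 2^-1 + 2%:R * H * H)%:C) * y m = 0.
    have : om*i * ((2^-1:R)%:C * (0 + y m)) - (- ('i * ((- H)%:C * z m.+1 + H%:C * 0)) - (k * H)%:C * 0) = 0.
      by rewrite hb subrr.
    move=> h; rewrite -[RHS]h hzm -hl h2E !(rmorphN, rmorphD, rmorphM, fmorphV, rmorph_nat).
    by field.
  have hy0 : y m = 0.
    move/eqP: key; rewrite !mulf_eq0 fmorph_eq0 => /orP [/orP [hi|hc]|/eqP //].
      by move: hi; rewrite eq_complex /= oner_eq0 andbF.
    have h1 := mulr_gt0 hH hH.
    have h2 : 0 <= om * 2^-1 by apply: mulr_ge0 => //; rewrite invr_ge0 ler0n.
    have : 0 < om * 2^-1 + 2%:R * H * H by rewrite -mulrA; lra.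
    by rewrite (eqP hc) ltxx.
  by rewrite hy0 hzm hy0 mulr0 oppr0.
move=> m hm; have := claim (N - m)%N; rewrite subKn // => h; apply h; exact: leq_subr.
Qed.
End Core.

Lemma main_kernel N (k om : R) (Y : 'cV[C]_N.+1) : 0 < k ->
  Ah_apply k N Y = (om *i) *: Y -> Y = 0.
Proof.
move=> hk hyp.
have hDu := Dh_unit N.
have hDTu : (Dh (R:=R) N)^T \in unitmx by rewrite unitmx_tr.
set Z := Zh k N Y.
have hZ : (Dh N)^T *m Z = - ((Mh N)^T *m Y) + ('i * (k / 2)%:C) *: (Elast N *m Y).
  by rewrite /Z /Zh mulKVmx.
have hY : (om *i) *: (Dh N *m Y) = - ('i *: (Mh N *m Z)) - (k / meshh N)%:C *: (Elast N *m Y).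
  by rewrite scalemxAr -hyp /Ah_apply mulKVmx.
clearbody Z.
have hH : 0 < (meshh (R:=R) N)^-1 by rewrite /meshh invrK ltr0n.
have hz : yv Z N.+1 = 0 by rewrite /yv ltnn.
have hA : forall m, (m <= N)%N ->
  (2^-1 : R)%:C * (yv Z m + yv Z m.+1) = - ((- (meshh N)^-1)%:C * yv Y m + ((meshh N)^-1)%:C * lft (yv Y) m)
     + ('i * (k / 2)%:C) * (if m == N then yv Y N else 0).
  move=> m hm; have h := congr1 (fun M : 'cV[C]_N.+1 => M (inord m) 0) hZ; simpl in h.
  have hm' : (m < N.+1)%N by [].
  rewrite rowDT -[Z (inord m) 0]yv_ord mxE [X in _ = X + _]mxE [X in _ = _ + X]mxE rowMT rowE -[Y (inord m) 0]yv_ord !(inordK hm') in h.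
  have e : \val (inord m : 'I_N.+1) = m := inordK hm'.
  rewrite e in h; exact: h.
have hB : forall m, (m <= N)%N ->
  (om *i) * ((2^-1 : R)%:C * (yv Y m + lft (yv Y) m)) =
   - ('i * ((- (meshh N)^-1)%:C * yv Z m + ((meshh N)^-1)%:C * yv Z m.+1)) - (k * (meshh N)^-1)%:C * (if m == N then yv Y N else 0).
  move=> m hm; have h := congr1 (fun M : 'cV[C]_N.+1 => M (inord m) 0) hY; simpl in h.
  have hm' : (m < N.+1)%N by [].
  rewrite mxE rowD -[Y (inord m) 0]yv_ord mxE [X in _ = X + _]mxE [X in _ = - X + _]mxE [X in _ = _ + X]mxE [X in _ = _ - X]mxE rowM rowE -[Z (inord m) 0]yv_ord !(inordK hm') in h.
  have e : \val (inord m : 'I_N.+1) = m := inordK hm'.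
  rewrite e in h; exact: h.
have h0 := @all_zero N _ k om (yv Y) (yv Z) hA hB hz hH hk.
apply/matrixP => i j; rewrite (ord1 j) mxE -yv_ord; apply: h0.
by rewrite -ltnS ltn_ord.
Qed.

Definition Bm (k : R) N : 'M[C]_N.+1 :=
  invmx (Dh N) *m (- ('i *: (Mh N *m (invmx (Dh N)^T *m (- (Mh N)^T + ('i * (k / 2)%:C) *: Elast N))))
     - (k / meshh N)%:C *: Elast N).

Lemma Ah_applyE k N (Y : 'cV[C]_N.+1) : Ah_apply k N Y = Bm k N *m Y.
Proof.
rewrite /Ah_apply /Zh /Bm -mulmxA; congr (_ *m _).
rewrite mulmxBl mulNmx -!scalemxAl -!mulmxA mulmxDl mulNmx -scalemxAl.
by [].
Qed.

Lemma AhE k N : Ah k N = Bm k N.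
Proof.
by apply/matrixP => i j; rewrite mxE Ah_applyE -colE mxE.
Qed.
End S.

Theorem lemma4 (R : rcfType) (k : R) (N : nat) :
  0 < k -> (0 < N)%N ->
  forall omega : R, (omega *i) \in resolvent_set (Ah k N).
Proof.
move=> hk _ om.
rewrite unfold_in /resolvent_set /=.
rewrite unitmxE unitfE -det_tr; apply/negP => /det0P [v hv0 hv].
have hY : ((om *i)%:M - Ah k N) *m v^T = 0.
  by apply: trmx_inj; rewrite trmx_mul trmxK hv trmx0.
have hY2 : Ah_apply k N v^T = (om *i) *: v^T.
  move/eqP: hY; rewrite mulmxBl mul_scalar_mx subr_eq0 => /eqP ->.
  by rewrite AhE Ah_applyE.
have := @main_kernel R N k om _ hk hY2.
move=> h; move/eqP: hv0; apply; by rewrite -(trmxK v) h trmx0.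
Qed.
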